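(* Let $n\geq3$, let $\sigma:\mathbb{R}\to\mathbb{R}$ be an increasing odd homeomorphism, let $1\leq i<j\leq n$, and let $B\subset\mathbb{R}^n$ be such that $x_ix_j<0$ for all $x=(x_1,\dots,x_n)\in B$ and the closure of $B$ contains a point $p=(p_1,\dots,p_n)$ with $p_i=p_j=0$. Then the closure of $\mathcal M(\sigma,n)B$ contains $Q_{i,j}=\{(x_1,\dots,x_n)\in\mathbb{R}^n:x_ix_j>0\}$.
   Context: For $1\leq k<l\leq n$ define $h_{k,l},v_{k,l}:\mathbb{R}^n\to\mathbb{R}^n$ by $h_{k,l}(x)=x+\sigma^{-1}(x_l)e_k$ and $v_{k,l}(x)=x+\sigma(x_k)e_l$, where $(e_k)$ is the standard basis. $\mathcal M(\sigma,n)$ is the monoid (containing the identity) generated by all $h_{k,l},v_{k,l}$, and $\mathcal M(\sigma,n)B=\{m(x):m\in\mathcal M(\sigma,n),x\in B\}$. *)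

(* Defs.v *)
(* R^n is 'rV[R]_n (row vectors) with its
   canonical (product / max-norm) topology from mathcomp-analysis. *)
From HB Require Import structures.
From mathcomp Require Import all_boot all_order all_algebra.
From mathcomp Require Import all_classical all_reals all_analysis.
Set Implicit Arguments. Unset Strict Implicit. Unset Printing Implicit Defensive.
Import Order.TTheory GRing.Theory Num.Theory.
Import numFieldNormedType.Exports.
Local Open Scope ring_scope.
Local Open Scope classical_set_scope.

Section Defs.
Variables (R : realType) (n : nat).

Definition hmap (sinv : R -> R) (k l : 'I_n) (x : 'rV[R]_n) : 'rV[R]_n :=
  \row_m (if m == k then x ord0 m + sinv (x ord0 l) else x ord0 m).

Definition vmap (sigma : R -> R) (k l : 'I_n) (x : 'rV[R]_n) : 'rV[R]_n :=
  \row_m (if m == l then x ord0 m + sigma (x ord0 k) else x ord0 m).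

Inductive inM (sigma sinv : R -> R) : ('rV[R]_n -> 'rV[R]_n) -> Prop :=
| inM_id : inM sigma sinv id
| inM_h (k l : 'I_n) (m : 'rV[R]_n -> 'rV[R]_n) :
    (k < l)%N -> inM sigma sinv m -> inM sigma sinv (hmap sinv k l \o m)
| inM_v (k l : 'I_n) (m : 'rV[R]_n -> 'rV[R]_n) :
    (k < l)%N -> inM sigma sinv m -> inM sigma sinv (vmap sigma k l \o m).

Definition MB (sigma sinv : R -> R) (B : set 'rV[R]_n) : set 'rV[R]_n :=
  [set y | exists m x, inM sigma sinv m /\ B x /\ y = m x].

End Defs.

(* Main.v *)
Require Import Defs.
From HB Require Import structures.
From mathcomp Require Import all_boot all_order all_algebra.
From mathcomp Require Import all_classical all_reals all_analysis.
From mathcomp Require Import ring lra.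
Import Order.TTheory GRing.Theory Num.Theory.
Import numFieldNormedType.Exports.
Local Open Scope ring_scope.
Local Open Scope classical_set_scope.
Set Implicit Arguments. Unset Strict Implicit.

Definition Cl (R : realType) (n : nat) (S : set 'rV[R]_n) (x : 'rV[R]_n) :=
  forall e : R, 0 < e -> exists z, S z /\ forall k, `|x ord0 k - z ord0 k| < e.
Arguments Cl {R n}.

Lemma closeP (R : realType) (n : nat) (S : set 'rV[R]_n) x :
  closure S x <-> Cl S x.
Proof.
split.
- move=> cx e e0.
  have [z [Sz bz]] := cx _ (nbhsx_ballx x e e0).
  exists z; split => // k.
  move: bz; rewrite -ball_normE /ball_ /=.
  move=> h; apply: le_lt_trans h.
  rewrite [X in _ <= X]/Num.Def.normr /= mx_normrE.
  apply/bigmax_geP; right; exists (ord0, k) => //.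
  by rewrite !mxE.
- move=> H B /nbhs_ballP [e /= e0 sB].
  have [z [Sz hz]] := H e e0.
  exists z; split => //; apply: sB.
  rewrite -ball_normE /ball_ /= [X in X < _]/Num.Def.normr /= mx_normrE.
  apply: bigmax_lt => // -[i k] _ /=.
  by rewrite !mxE (ord1 i); apply: hz.
Qed.

Lemma Cl_idem (R : realType) (n : nat) (S : set 'rV[R]_n) x :
  Cl (Cl S) x -> Cl S x.
Proof.
move=> H e e0.
have e20 : 0 < e / 2 by rewrite divr_gt0.
have [z [Cz hz]] := H _ e20.
have [u [Su hu]] := Cz _ e20.
exists u; split => // k.
rewrite (splitr e); apply: le_lt_trans (ler_distD (z ord0 k) _ _) _.
by rewrite ltrD.
Qed.

Lemma Cl_sub (R : realType) (n : nat) (S : set 'rV[R]_n) x : S x -> Cl S x.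
Proof. by move=> Sx e e0; exists x; split => // k; rewrite subrr normr0. Qed.

Lemma cont_eps (R : realType) (f : R -> R) x : continuous f ->
  forall e, 0 < e -> exists2 d, 0 < d & forall u, `|x - u| < d -> `|f x - f u| < e.
Proof.
move=> fc e e0.
have : nbhs x (fun u => `|f x - f u| < e) by exact: (cvgrPdist_lt _ _).1 (fc x) e e0.
move=> /nbhs_ballP [d /= d0 H]; exists d => // u hu; apply: H.
Qed.

Definition gen (R : realType) (n : nat) (F : R -> R) (a b : 'I_n) (x : 'rV[R]_n) : 'rV[R]_n :=
  \row_m (if m == a then x ord0 m + F (x ord0 b) else x ord0 m).
Arguments gen {R n}.

Lemma Cl_gen (R : realType) (n : nat) (S : set 'rV[R]_n) F a b :
  continuous F -> (forall z, S z -> S (gen F a b z)) ->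
  forall x, Cl S x -> Cl S (gen F a b x).
Proof.
move=> Fc HS x Hx e e0.
have e20 : 0 < e / 2 by rewrite divr_gt0.
have [d d0 Hd] := @cont_eps _ F (x ord0 b) Fc _ e20.
have m0 : 0 < Num.min d (e / 2) by rewrite lt_min d0.
have [z [Sz hz]] := Hx _ m0.
exists (gen F a b z); split; first exact: HS.
move=> k; rewrite !mxE.
have hk : forall k, `|x ord0 k - z ord0 k| < e / 2.
  by move=> k'; apply: lt_le_trans (hz k') _; rewrite ge_min lexx orbT.
case: eqP => _.
  rewrite opprD addrACA (splitr e); apply: le_lt_trans (ler_normD _ _) _.
  rewrite ltrD //; apply: Hd; apply: lt_le_trans (hz b) _; by rewrite ge_min lexx.
by apply: lt_trans (hk k) _; rewrite ltr_pdivrMr // ltr_pMr // ltr1n.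
Qed.

Lemma iter_gen (R : realType) (n : nat) F (a b : 'I_n) (z : 'rV[R]_n) N :
  a != b -> forall m, (iter N (gen F a b) z) ord0 m =
  if m == a then z ord0 m + N%:R * F (z ord0 b) else z ord0 m.
Proof.
move=> ab; elim: N => [|N IH] m /=.
  by case: eqP => //; rewrite mul0r addr0.
rewrite /gen mxE IH (IH b).
rewrite [b == a]eq_sym (negbTE ab).
by case: eqP => // ->; rewrite mulrSr mulrDl mul1r addrA.
Qed.

Lemma iterC (T : Type) (C : set T) (g : T -> T) N z :
  (forall z, C z -> C (g z)) -> C z -> C (iter N g z).
Proof. by move=> Hg Cz; elim: N => //= N IH; apply: Hg. Qed.

Definition Ap (R : realType) (n : nat) (C : set 'rV[R]_n) (w : 'rV[R]_n)
  (P : 'rV[R]_n -> Prop) :=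
  forall e : R, 0 < e -> exists z, C z /\ P z /\ forall k, `|w ord0 k - z ord0 k| < e.
Arguments Ap {R n}.

Definition upd (R : realType) (n : nat) (w : 'rV[R]_n) (a : 'I_n) (v : R) : 'rV[R]_n :=
  \row_m (if m == a then v else w ord0 m).
Arguments upd {R n}.

Lemma half_lt (R : realType) (e : R) : 0 < e -> e / 2 < e.
Proof. by move=> e0; rewrite ltr_pdivrMr // ltr_pMr // ltr1n. Qed.

Lemma lever (R : realType) (n : nat) (C : set 'rV[R]_n) (F : R -> R) (a b : 'I_n) (s beta : R)
  (w : 'rV[R]_n) (P : 'rV[R]_n -> Prop) :
  a != b -> (s = 1 \/ s = -1) -> continuous F -> F 0 = 0 ->
  (forall u, 0 < s * u -> 0 < s * F u) ->
  (forall z, C z -> C (gen F a b z)) -> w ord0 b = 0 ->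
  (forall z z' : 'rV[R]_n, (forall m, m != a -> z ord0 m = z' ord0 m) -> P z -> P z') ->
  0 <= s * beta ->
  Ap C w (fun z => P z /\ 0 < s * z ord0 b) ->
  Ap C (upd w a (w ord0 a + beta))
    (fun z => P z /\ 0 < s * z ord0 b /\ 0 < s * (z ord0 a - (w ord0 a + beta))).
Proof.
move=> ab hs Fc F0 Fs HC wb0 HP hb H e e0.
have e20 : 0 < e / 2 by rewrite divr_gt0.
have [d d0 Hd] := @cont_eps _ F 0 Fc _ e20.
have m0 : 0 < Num.min d (e / 2) by rewrite lt_min d0.
have [z [Cz [[Pz sz] hz]]] := H _ m0.
have hz2 : forall k, `|w ord0 k - z ord0 k| < e / 2.
  by move=> k; apply: lt_le_trans (hz k) _; rewrite ge_min lexx orbT.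
have zb : `|F (z ord0 b)| < e / 2.
  have := Hd (z ord0 b); rewrite F0 !sub0r !normrN; apply.
  by rewrite -normrN -sub0r -wb0; apply: lt_le_trans (hz b) _; rewrite ge_min lexx.
have sabs : forall x, `|s * x| = `|x|.
  by move=> x; case: hs => ->; rewrite ?mul1r ?mulN1r ?normrN.
have sabs2 : forall x, 0 <= s * x -> `|x| = s * x.
  by move=> x hx; rewrite -sabs ger0_norm.
set T := w ord0 a + beta.
have ba : b != a by rewrite eq_sym.
case: (ltP (s * (T - z ord0 a)) 0) => hD.
  exists z; split => //; split.
    split => //; split => //.
    by rewrite -opprB mulrN oppr_gt0.
  move=> k; rewrite /upd mxE; case: eqP => [->|_]; last first.
    by apply: lt_trans (hz2 k) (half_lt e0).
  rewrite distrC sabs2; last by rewrite -opprB mulrN oppr_ge0 ltW.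
  apply: (@le_lt_trans _ _ (s * (z ord0 a - w ord0 a))).
    by rewrite /T opprD addrA mulrBr lerBlDr lerDl.
  apply: le_lt_trans (ler_norm _) _; rewrite sabs distrC.
  by apply: lt_trans (hz2 a) (half_lt e0).
have q0 : 0 < s * F (z ord0 b) by exact: Fs.
set q := s * F (z ord0 b) in q0 *.
set D := s * (T - z ord0 a) in hD *.
have Dq0 : 0 <= D / q by rewrite divr_ge0 // ltW.
have /andP[hN2 hN1] := truncn_itv Dq0.
set N := (Num.truncn (D / q)).+1 in hN1.
have hN1' : D < N%:R * q by rewrite -ltr_pdivrMr.
have hN2' : N%:R * q - D <= q.
  rewrite /N -addn1 natrD mulrDl mul1r.
  have : (Num.truncn (D / q))%:R * q <= D by rewrite -ler_pdivlMr.
  lra.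
have qe : q < e / 2.
  by apply: le_lt_trans (ler_norm _) _; rewrite sabs.
exists (iter N (gen F a b) z); split; first exact: iterC.
have E : s * (z ord0 a + N%:R * F (z ord0 b) - T) = N%:R * q - D.
  by rewrite /q /D; ring.
split.
  split.
    by apply: (HP z) => // m /negbTE ma; rewrite iter_gen // ma.
  rewrite !iter_gen // (negbTE ba) eqxx; split => //.
  by rewrite E subr_gt0.
move=> k; rewrite /upd mxE iter_gen //; case: eqP => [->|_]; last first.
  by apply: lt_trans (hz2 k) (half_lt e0).
have h2 := half_lt e0.
rewrite distrC sabs2; lra.
Qed.
Lemma sign_const (R : realType) (f : R -> R) (d : R) : continuous f ->
  (forall s, 0 <= s <= d -> f s != 0) -> 0 < f 0 ->
  forall s, 0 <= s <= d -> 0 < f s.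
Proof.
move=> fc nz f0 s /andP[s0 sd].
rewrite ltNge; apply/negP => fs.
have [c /andP[c0 cs] fc0] := @IVT _ f 0 s 0 s0 (continuous_subspaceT fc)
  (ltac:(by rewrite ge_min fs orbT le_max (ltW f0))).
rewrite bnd_simp in c0; rewrite bnd_simp in cs.
by have := nz c; rewrite c0 (le_trans cs sd) fc0 eqxx => /(_ isT).
Qed.

Lemma contB (R : realType) (f g : R -> R) : continuous f -> continuous g ->
  continuous (fun x => f x - g x).
Proof. by move=> fc gc x; exact: (continuousB (fc x) (gc x)). Qed.

Lemma contC (R : realType) (f g : R -> R) : continuous f -> continuous g ->
  continuous (fun x => g (f x)).
Proof. by move=> fc gc x; apply: (continuous_comp (fc x) (gc (f x))). Qed.

Lemma contS (R : realType) (c : R) : continuous (fun x : R => c + x).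
Proof. by move=> x; apply: continuousD; [exact: cst_continuous | exact: cvg_id]. Qed.

Definition pt (R : realType) (n : nat) (y : 'rV[R]_n) (i j : 'I_n) (a b : R) : 'rV[R]_n :=
  \row_k (if k == i then a else if k == j then b else y ord0 k).

Lemma gen_ptH (R : realType) (n : nat) (F : R -> R) (y : 'rV[R]_n) i j a b :
  i != j -> gen F i j (pt y i j a b) = pt y i j (a + F b) b.
Proof.
move=> ij; apply/rowP => k; rewrite !mxE.
have ji : (j == i) = false by rewrite eq_sym (negbTE ij).
by rewrite ji eqxx; case: (k == i).
Qed.

Lemma gen_ptV (R : realType) (n : nat) (F : R -> R) (y : 'rV[R]_n) i j a b :
  i != j -> gen F j i (pt y i j a b) = pt y i j a (b + F a).
Proof.
move=> ij; apply/rowP => k; rewrite !mxE.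
have ji : (j == i) = false by rewrite eq_sym (negbTE ij).
case: eqP => [->|//]; by rewrite ji eqxx.
Qed.

Lemma density (R : realType) (n : nat) (C : set 'rV[R]_n) (sigma sinv : R -> R)
  (i j : 'I_n) (y : 'rV[R]_n) :
  i != j -> continuous sigma -> continuous sinv ->
  cancel sigma sinv -> cancel sinv sigma ->
  (forall x y : R, x < y -> sigma x < sigma y) -> sigma 0 = 0 ->
  (forall z, C z -> C (gen sinv i j z)) -> (forall z, C z -> C (gen sigma j i z)) ->
  (forall a, 0 < a -> C (pt y i j a 0) /\ C (pt y i j 0 a)) ->
  0 < y ord0 i -> 0 < y ord0 j -> Cl C y.
Proof.
move=> ij sc sic ssi sis smono s0 HC VC AX yi yj e e0.
apply: contrapT => Hno.
have Hno' : forall z, C z -> ~ (forall k, `|y ord0 k - z ord0 k| < e).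
  by move=> z Cz hk; apply: Hno; exists z.
have sle : forall u v, u <= v -> sigma u <= sigma v.
  by move=> u v; rewrite le_eqVlt => /orP[/eqP->//|/smono/ltW].
have silt : forall u v, u < v -> sinv u < sinv v.
  move=> u v uv; rewrite ltNge; apply/negP => /sle; rewrite !sis => vu.
  by move: (lt_le_trans uv vu); rewrite ltxx.
have sile : forall u v, u <= v -> sinv u <= sinv v.
  by move=> u v; rewrite le_eqVlt => /orP[/eqP->//|/silt/ltW].
have si0 : sinv 0 = 0 by rewrite -s0 ssi.
have key : forall u v, u < sinv v -> sigma u < v.
  by move=> u v /smono; rewrite sis.
set d := e / 2.
have d0 : 0 < d by rewrite divr_gt0.
have de : d < e by exact: half_lt.
have near1 : forall s, 0 <= s <= d -> ~ C (pt y i j (y ord0 i + s) (y ord0 j)).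
  move=> s /andP[s0' sd] Cp; apply: (Hno' _ Cp) => k; rewrite !mxE.
  case: eqP => [->|_]; last case: eqP => [->|_].
  - by rewrite opprD addrA subrr sub0r normrN ger0_norm //; apply: le_lt_trans sd de.
  - by rewrite subrr normr0.
  - by rewrite subrr normr0.
have near2 : forall s, 0 <= s <= d -> ~ C (pt y i j (y ord0 i) (y ord0 j + s)).
  move=> s /andP[s0' sd] Cp; apply: (Hno' _ Cp) => k; rewrite !mxE.
  case: eqP => [->|_]; last case: eqP => [->|_].
  - by rewrite subrr normr0.
  - by rewrite opprD addrA subrr sub0r normrN ger0_norm //; apply: le_lt_trans sd de.
  - by rewrite subrr normr0.
set eta := Num.min (sigma d) (sinv d).
have eta0 : 0 < eta.
  rewrite lt_min; apply/andP; split.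
    by rewrite -[X in X < _]s0; exact: smono.
  by rewrite -[X in X < _]si0; exact: silt.
have Inv : forall k : nat, exists a1 b1 a2 b2 : R -> R,
  [/\ continuous a1, continuous b1, continuous a2 & continuous b2] /\
  (forall s, 0 <= s <= d -> [/\ 0 < a1 s, 0 < b1 s, 0 < a2 s & 0 < b2 s]) /\
  (forall s, 0 <= s <= d -> (C (pt y i j (a1 s) (b1 s)) -> C (pt y i j (y ord0 i + s) (y ord0 j))) /\
                           (C (pt y i j (a2 s) (b2 s)) -> C (pt y i j (y ord0 i) (y ord0 j + s)))) /\
  (a1 0 = a2 0 /\ b1 0 = b2 0) /\
  [/\ a1 0 + d <= a1 d, b1 d <= b1 0, b2 0 + d <= b2 d & a2 d <= a2 0] /\
  b1 d + a2 d + k%:R * eta <= y ord0 i + y ord0 j.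
  elim=> [|k [a1 [b1 [a2 [b2 [[c1 c2 c3 c4] [pos [back [[e1 e2] [[D1 D2 D3 D4] pot]]]]]]]]]].
    exists (fun s => y ord0 i + s), (fun=> y ord0 j), (fun=> y ord0 i), (fun s => y ord0 j + s).
    split; first by split; [exact: contS | exact: cst_continuous | exact: cst_continuous | exact: contS].
    split; first by move=> s /andP[s0' _]; split; lra.
    split; first by move=> s _; split.
    split; first by rewrite !addr0.
    split; first by split => //; rewrite addr0.
    by rewrite mul0r addr0 addrC.
  have psi1nz : forall s, 0 <= s <= d -> a1 s - sinv (b1 s) != 0.
    move=> s hs; apply/negP => /eqP h.
    have [_ hb _ _] := pos s hs.
    apply: (near1 s hs); apply: (back s hs).1.
    rewrite (subr0_eq h) -[sinv _]add0r -gen_ptH //.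
    exact: HC (AX _ hb).2.
  have psi2nz : forall s, 0 <= s <= d -> a2 s - sinv (b2 s) != 0.
    move=> s hs; apply/negP => /eqP h.
    have [_ _ _ hb] := pos s hs.
    apply: (near2 s hs); apply: (back s hs).2.
    rewrite (subr0_eq h) -[sinv _]add0r -gen_ptH //.
    exact: HC (AX _ hb).2.
  have h00 : (0:R) <= 0 <= d by apply/andP; split; [exact: lexx | exact: ltW].
  have hdd : (0:R) <= d <= d by rewrite lexx ltW.
  have [_ hb20 _ _] := pos 0 h00.
  have [ha1d _ _ hb2d] := pos d hdd.
  have [ha10 _ _ _] := pos 0 h00.
  have [_ _ _ hb200] := pos 0 h00.
  have etasi : eta <= sinv d by rewrite /eta ge_min lexx orbT.
  have etas : eta <= sigma d by rewrite /eta ge_min lexx.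
  have kS : (k.+1)%:R * eta = k%:R * eta + eta by rewrite -addn1 natrD mulrDl mul1r.
  case: (ltgtP (a1 0 - sinv (b1 0)) 0) => h; last first.
  - by move: (psi1nz 0 h00); rewrite h eqxx.
  - have p1 := sign_const (contB c1 (contC c2 sic)) psi1nz h.
    have h2 : 0 < a2 0 - sinv (b2 0) by rewrite -e1 -e2.
    have p2 := sign_const (contB c3 (contC c4 sic)) psi2nz h2.
    exists (fun s => a1 s - sinv (b1 s)), b1, (fun s => a2 s - sinv (b2 s)), b2.
    split; first by split => //; apply: contB => //; apply: contC.
    split; first by move=> s hs; have [_ ? _ ?] := pos s hs; split => //; [exact: p1 | exact: p2].
    split.
      move=> s hs; split => Cp; [apply: (back s hs).1 | apply: (back s hs).2].
        by rewrite -[a1 s](subrK (sinv (b1 s))) -gen_ptH //; exact: HC.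
      by rewrite -[a2 s](subrK (sinv (b2 s))) -gen_ptH //; exact: HC.
    split; first by rewrite e1 e2.
    have l1 := sile _ _ D2.
    have l2 : sinv (b2 0) <= sinv (b2 d) by apply: sile; lra.
    have l3 : sinv d <= sinv (b2 d) by apply: sile; lra.
    split; first by split; lra.
    rewrite kS; lra.
  - have p1 : forall s, 0 <= s <= d -> 0 < sinv (b1 s) - a1 s.
      apply: sign_const; first by apply: contB => //; apply: contC.
        by move=> s hs; rewrite -oppr_eq0 opprB; exact: psi1nz.
      lra.
    have p2 : forall s, 0 <= s <= d -> 0 < sinv (b2 s) - a2 s.
      apply: sign_const; first by apply: contB => //; apply: contC.
        by move=> s hs; rewrite -oppr_eq0 opprB; exact: psi2nz.
      rewrite -e1 -e2; lra.
    exists a1, (fun s => b1 s - sigma (a1 s)), a2, (fun s => b2 s - sigma (a2 s)).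
    split; first by split => //; apply: contB => //; apply: contC.
    split.
      move=> s hs; have [? _ ? _] := pos s hs; split => //; rewrite subr_gt0; apply: key.
        by have := p1 s hs; lra.
      by have := p2 s hs; lra.
    split.
      move=> s hs; split => Cp; [apply: (back s hs).1 | apply: (back s hs).2].
        by rewrite -[b1 s](subrK (sigma (a1 s))) -gen_ptV //; exact: VC.
      by rewrite -[b2 s](subrK (sigma (a2 s))) -gen_ptV //; exact: VC.
    split; first by rewrite e1 e2.
    have l1 : sigma (a1 0) <= sigma (a1 d) by apply: sle; lra.
    have l2 := sle _ _ D4.
    have l3 : sigma d <= sigma (a1 d) by apply: sle; lra.
    split; first by split; lra.
    rewrite kS; lra.
have [k0 hk0] : exists k : nat, y ord0 i + y ord0 j < k%:R * eta.
  exists (Num.bound ((y ord0 i + y ord0 j) / eta)).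
  rewrite -ltr_pdivrMr //; apply: archi_boundP.
  by rewrite divr_ge0 // ?ltW // addr_gt0.
have [a1 [b1 [a2 [b2 [_ [pos [_ [_ [_ pot]]]]]]]]] := Inv k0.
have /andP[d0' dd] : 0 <= d <= d by rewrite lexx ltW.
have [_ hb1 ha2 _] := pos d (introT andP (conj d0' dd)).
lra.
Qed.

Lemma Ap_ext (R : realType) (n : nat) (C : set 'rV[R]_n) (w w' : 'rV[R]_n) (P Q : 'rV[R]_n -> Prop) :
  (forall k, w ord0 k = w' ord0 k) -> (forall z, P z -> Q z) -> Ap C w P -> Ap C w' Q.
Proof.
move=> hw hPQ H e e0; have [z [Cz [Pz hz]]] := H e e0.
by exists z; split => //; split; [exact: hPQ | move=> k; rewrite -hw].
Qed.

Lemma Ap_Cl (R : realType) (n : nat) (C : set 'rV[R]_n) (w : 'rV[R]_n) (P : 'rV[R]_n -> Prop) : Ap C w P -> Cl C w.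
Proof. by move=> H e e0; have [z [Cz [_ hz]]] := H e e0; exists z. Qed.

Lemma sgnF (R : realType) (F : R -> R) (s : R) :
  (forall x y, x < y -> F x < F y) -> F 0 = 0 -> (s = 1 \/ s = -1) ->
  forall u, 0 < s * u -> 0 < s * F u.
Proof.
move=> Fm F0 [->|->] u; rewrite ?mul1r ?mulN1r ?oppr_gt0.
  by move=> /Fm; rewrite F0.
by move=> /Fm; rewrite F0.
Qed.

Lemma axis1 (R : realType) (n : nat) (C : set 'rV[R]_n) (F1 F2 : R -> R) (i j : 'I_n)
  (w : 'rV[R]_n) (s t a : R) :
  i != j -> (forall x, Cl C x -> C x) ->
  continuous F1 -> continuous F2 -> F1 0 = 0 -> F2 0 = 0 ->
  (forall x y, x < y -> F1 x < F1 y) -> (forall x y, x < y -> F2 x < F2 y) ->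
  (forall z, C z -> C (gen F1 i j z)) -> (forall z, C z -> C (gen F2 j i z)) ->
  w ord0 i = 0 -> w ord0 j = 0 -> (s = 1 \/ s = -1) -> (t = 1 \/ t = -1) ->
  Ap C w (fun z => 0 < s * z ord0 i /\ 0 < - s * z ord0 j) ->
  0 < t * a -> C (upd w i a).
Proof.
move=> ij ClC c1 c2 f10 f20 m1 m2 HC1 HC2 wi wj hs ht H ta.
have ji : j != i by rewrite eq_sym.
have hs' : - s = 1 \/ - s = -1 by case: hs => ->; [right | left; rewrite opprK].
have hts : t = s \/ t = - s.
  by case: hs => ->; case: ht => ->; rewrite ?opprK; auto.
case: hts => [ets|ets].
- (* create lever at j with sign s using lever i *)
  have H1 := @lever R n C F2 j i s 0 w (fun _ => True) ji hs c2 f20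
    (sgnF m2 f20 hs) HC2 wi (fun _ _ _ _ => I) (ltac:(by rewrite mulr0))
    (Ap_ext (fun k => erefl) (fun z hz => conj I (proj1 hz)) H).
  set w' := upd w j (w ord0 j + 0) in H1.
  have w'j : w' ord0 j = 0 by rewrite /w' /upd mxE eqxx wj addr0.
  have H1' : Ap C w' (fun z => True /\ 0 < s * z ord0 j).
    apply: Ap_ext H1 => // z [_ [_ hz]]; split => //.
    by move: hz; rewrite wj addr0 subr0.
  have H2 := @lever R n C F1 i j s a w' (fun _ => True) ij hs c1 f10
    (sgnF m1 f10 hs) HC1 w'j (fun _ _ _ _ => I) (ltac:(by rewrite -ets ltW)) H1'.
  apply: ClC; apply: Ap_Cl; apply: Ap_ext H2 => // k.
  rewrite /upd /w' !mxE (negbTE ij) wi add0r.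
  by case: (k == i) => //; case: eqP => // ->; rewrite wj addr0.
- have H2 := @lever R n C F1 i j (- s) a w (fun _ => True) ij hs' c1 f10
    (sgnF m1 f10 hs') HC1 wj (fun _ _ _ _ => I) (ltac:(by rewrite -ets ltW))
    (Ap_ext (fun k => erefl) (fun z hz => conj I (proj2 hz)) H).
  apply: ClC; apply: Ap_Cl; apply: Ap_ext H2 => // k.
  by rewrite /upd !mxE wi add0r.
Qed.

Lemma gen_opp (R : realType) (n : nat) (F : R -> R) (a b : 'I_n) (x : 'rV[R]_n) :
  (forall u, F (- u) = - F u) -> gen F a b (- x) = - gen F a b x.
Proof.
move=> Fo; apply/rowP => k; rewrite !mxE; case: eqP => _ //.
by rewrite Fo opprD.
Qed.

Lemma MB_genH (R : realType) (n : nat) (sigma sinv : R -> R) (B : set 'rV[R]_n) (a b : 'I_n) z :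
  (a < b)%N -> MB sigma sinv B z -> MB sigma sinv B (gen sinv a b z).
Proof.
move=> ab [m [x [Hm [Bx ->]]]].
by exists (hmap sinv a b \o m), x; split; [exact: inM_h | split].
Qed.

Lemma MB_genV (R : realType) (n : nat) (sigma sinv : R -> R) (B : set 'rV[R]_n) (a b : 'I_n) z :
  (b < a)%N -> MB sigma sinv B z -> MB sigma sinv B (gen sigma a b z).
Proof.
move=> ab [m [x [Hm [Bx ->]]]].
by exists (vmap sigma b a \o m), x; split; [exact: inM_v | split].
Qed.

Lemma mul_neg_cases (R : realType) (u v : R) : u * v < 0 ->
  (0 < u /\ v < 0) \/ (u < 0 /\ 0 < v).
Proof.
case: (ltgtP u 0) => hu.
- by rewrite nmulr_rlt0 // => hv; right.
- by rewrite pmulr_rlt0 // => hv; left.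
- by rewrite hu mul0r ltxx.
Qed.

Unset Implicit Arguments.

Theorem lemma5 (R : realType) (n : nat) (sigma sinv : R -> R)
  (i j : 'I_n) (B : set 'rV[R]_n) (p : 'rV[R]_n) :
  (3 <= n)%N ->
  (* sigma is an increasing odd homeomorphism with inverse sinv *)
  continuous sigma -> continuous sinv ->
  cancel sigma sinv -> cancel sinv sigma ->
  (forall x y : R, x < y -> sigma x < sigma y) ->
  (forall x : R, sigma (- x) = - sigma x) ->
  (i < j)%N ->
  (forall x, B x -> x ord0 i * x ord0 j < 0) ->
  closure B p -> p ord0 i = 0 -> p ord0 j = 0 ->
  [set x : 'rV[R]_n | 0 < x ord0 i * x ord0 j] `<=` closure (MB sigma sinv B).
Proof.
move=> _ sc sic ssi sis smono sodd ltij HB cB pi pj y hy.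
have ij : i != j by rewrite neq_ltn ltij.
have ji : j != i by rewrite eq_sym.
set C := Cl (MB sigma sinv B).
have ClC : forall x, Cl C x -> C x by move=> x; exact: Cl_idem.
have s0 : sigma 0 = 0.
  by have := sodd 0; rewrite oppr0; lra.
have sle : forall u v, u <= v -> sigma u <= sigma v.
  by move=> u v; rewrite le_eqVlt => /orP[/eqP->//|/smono/ltW].
have silt : forall u v, u < v -> sinv u < sinv v.
  move=> u v uv; rewrite ltNge; apply/negP => /sle; rewrite !sis => vu.
  by move: (lt_le_trans uv vu); rewrite ltxx.
have si0 : sinv 0 = 0 by rewrite -s0 ssi.
have siodd : forall u, sinv (- u) = - sinv u.
  by move=> u; rewrite -{1}(sis u) -sodd ssi.
have HCH : forall z, C z -> C (gen sinv i j z).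
  by apply: Cl_gen => // z; exact: MB_genH.
have HCV : forall z, C z -> C (gen sigma j i z).
  by apply: Cl_gen => // z; exact: MB_genV.
have HCg : forall a b : 'I_n, a != b ->
    exists F : R -> R, [/\ continuous F, F 0 = 0, (forall x y : R, x < y -> F x < F y) &
      forall z, C z -> C (gen F a b z)].
  move=> a b ab; case: (ltngtP a b) => hab; last by move: ab; rewrite -(inj_eq val_inj) /= hab eqxx.
  - exists sinv; split => //; apply: Cl_gen => // z; exact: MB_genH.
  - exists sigma; split => //; apply: Cl_gen => // z; exact: MB_genV.
have BC : forall z, B z -> C z.
  move=> z Bz; apply: Cl_sub; exists id, z; split; [exact: inM_id | by split].
have [s [hs Hp]] : exists s : R, (s = 1 \/ s = -1) /\
    Ap C p (fun z => 0 < s * z ord0 i /\ 0 < - s * z ord0 j).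
  have cB' := (closeP B p).1 cB.
  case: (pselect (Ap C p (fun z => 0 < 1 * z ord0 i /\ 0 < - 1 * z ord0 j))) => H1.
    by exists 1; split => //; left.
  exists (-1); split; first by right.
  have [e0 [e00 He0]] : exists e0 : R, 0 < e0 /\ forall z, C z ->
      (0 < 1 * z ord0 i /\ 0 < - 1 * z ord0 j) -> ~ (forall k, `|p ord0 k - z ord0 k| < e0).
    apply: contrapT => Hn; apply: H1 => e he.
    apply: contrapT => Hz; apply: Hn; exists e; split => // z Cz Pz hk.
    by apply: Hz; exists z.
  move=> e he.
  have m0 : 0 < Num.min e e0 by rewrite lt_min he e00.
  have [z [Bz hz]] := cB' _ m0.
  exists z; split; first exact: BC.
  have hze : forall k, `|p ord0 k - z ord0 k| < e.
    by move=> k; apply: lt_le_trans (hz k) _; rewrite ge_min lexx.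
  split => //.
  case: (mul_neg_cases (HB z Bz)) => -[h1 h2].
    exfalso; apply: (He0 z (BC z Bz)); first by rewrite mul1r mulN1r oppr_gt0.
    by move=> k; apply: lt_le_trans (hz k) _; rewrite ge_min lexx orbT.
  by rewrite opprK mul1r mulN1r oppr_gt0.
have hs' : - s = 1 \/ - s = -1 by case: hs => ->; [right | left; rewrite opprK].
set w := fun m : nat => \row_(k < n) (if (k == i) || (k == j) then 0
   else if (k < m)%N then y ord0 k else p ord0 k) : 'rV[R]_n.
have wi : forall m, w m ord0 i = 0 by move=> m; rewrite /w /= mxE eqxx.
have wj : forall m, w m ord0 j = 0 by move=> m; rewrite /w /= mxE eqxx orbT.
have Wm : forall m, Ap C (w m) (fun z => 0 < s * z ord0 i /\ 0 < - s * z ord0 j).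
  elim=> [|m IH].
    apply: Ap_ext Hp => // k; rewrite /w /= mxE.
    case: (eqVneq k i) => [->|ki]; first by rewrite ?eqxx /= ?pi.
    case: (eqVneq k j) => [->|kj]; first by rewrite ?eqxx ?orbT /= ?pj.
    by [].

  case: (ltnP m n) => hmn; last first.
    apply: Ap_ext IH => // k; rewrite /w /= !mxE.
    have km : (k < m)%N by apply: leq_trans (ltn_ord k) hmn.
    by rewrite km (ltn_trans km (ltnSn m)).
  set k0 : 'I_n := Ordinal hmn.
  have same : forall k : 'I_n, k != k0 -> ((k < m.+1)%N = (k < m)%N).
    move=> k kk0; rewrite ltnS leq_eqVlt.
    have -> : (nat_of_ord k == m) = false.
      by apply/negbTE; move: kk0; apply: contra => /eqP km; apply/eqP/val_inj.
    by [].
  case: (boolP ((k0 == i) || (k0 == j))) => hk0.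
    apply: Ap_ext IH => // k; rewrite /w /= !mxE.
    case: (eqVneq k k0) => [->|kk0]; first by rewrite hk0.
    by rewrite same.
  set beta := y ord0 k0 - p ord0 k0.
  have wk0 : w m ord0 k0 = p ord0 k0.
    by rewrite /w /= mxE (negbTE hk0) /= ltnn.
  have entries : forall k, upd (w m) k0 (w m ord0 k0 + beta) ord0 k = w m.+1 ord0 k.
    move=> k; rewrite /upd mxE; case: (eqVneq k k0) => [->|kk0].
      by rewrite wk0 /beta /w mxE (negbTE hk0) /= ltnSn addrC subrK.
    by rewrite /w /= !mxE same.
  move: hk0; rewrite negb_or => /andP[k0i k0j].
  case: (leP 0 (s * beta)) => hb.
  - have [F [Fc F0 Fm HF]] := HCg k0 i k0i.
    have L := @lever R n C F k0 i s beta (w m) (fun z => 0 < - s * z ord0 j) k0i hs Fc F0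
      (sgnF Fm F0 hs) HF (wi m) _ hb.
    have := L (fun z z' hzz hz => ltac:(by rewrite -(hzz j) // eq_sym)).
    move=> /(_ (Ap_ext (fun k => erefl) (fun z hz => conj (proj2 hz) (proj1 hz)) IH)) L'.
    by apply: Ap_ext L' => // z [h1 [h2 _]].
  - have [F [Fc F0 Fm HF]] := HCg k0 j k0j.
    have hb' : 0 <= - s * beta by rewrite mulNr oppr_ge0 ltW.
    have L := @lever R n C F k0 j (- s) beta (w m) (fun z => 0 < s * z ord0 i) k0j hs' Fc F0
      (sgnF Fm F0 hs') HF (wj m) _ hb'.
    have := L (fun z z' hzz hz => ltac:(by rewrite -(hzz i) // eq_sym)).
    move=> /(_ IH) L'.
    by apply: Ap_ext L' => // z [h1 [h2 _]].
have wni : forall k, (k == i) || (k == j) -> w n ord0 k = 0.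
  by move=> k hk; rewrite /w /= mxE hk.
have AX : forall t a : R, (t = 1 \/ t = -1) -> 0 < t * a ->
    C (pt y i j a 0) /\ C (pt y i j 0 a).
  move=> t a ht ta; split.
    have := axis1 ij ClC sic sc si0 s0 silt smono HCH HCV (wi n) (wj n) hs ht (Wm n) ta.
    congr C; apply/rowP => k; rewrite /upd /pt /w /= !mxE ltn_ord.
    by case: (k == i); case: (k == j).
  have H' : Ap C (w n) (fun z => 0 < - s * z ord0 j /\ 0 < - - s * z ord0 i).
    by apply: Ap_ext (Wm n) => // z [h1 h2]; rewrite opprK.
  have := axis1 ji ClC sc sic s0 si0 smono silt HCV HCH (wj n) (wi n) hs' ht H' ta.
  congr C; apply/rowP => k; rewrite /upd /pt /w /= !mxE ltn_ord.
  case: (eqVneq k j) => [->|kj]; first by rewrite (negbTE ji).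
  by case: (k == i).
apply/closeP; apply: ClC.
move: hy; rewrite /= => hy.
case: (ltgtP (y ord0 i) 0) => hyi; last by move: hy; rewrite hyi mul0r ltxx.
- have hyj : y ord0 j < 0 by move: hy; rewrite nmulr_rgt0.
  set C' := fun x : 'rV[R]_n => C (- x).
  have HCH' : forall z, C' z -> C' (gen sinv i j z).
    by move=> z; rewrite /C' -gen_opp //; exact: HCH.
  have HCV' : forall z, C' z -> C' (gen sigma j i z).
    by move=> z; rewrite /C' -gen_opp //; exact: HCV.
  have AX' : forall a, 0 < a -> C' (pt (- y) i j a 0) /\ C' (pt (- y) i j 0 a).
    move=> a a0; have [h1 h2] := AX (-1) (- a) (or_intror erefl)
      (ltac:(by rewrite mulN1r opprK)).
    have ptN : forall u v, - pt (- y) i j u v = pt y i j (- u) (- v).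
      move=> u v; apply/rowP => k; rewrite /pt !mxE.
      by case: eqP => // _; case: eqP => // _; rewrite opprK.
    by rewrite /C' !ptN !oppr0.
  have D := density ij sc sic ssi sis smono s0 HCH' HCV' AX'
    (ltac:(by rewrite mxE oppr_gt0)) (ltac:(by rewrite mxE oppr_gt0)).
  move=> e e0; have [z [Cz hz]] := D e e0.
  exists (- z); split => // k.
  by rewrite mxE opprK -normrN opprD; move: (hz k); rewrite mxE.
- have hyj : 0 < y ord0 j by move: hy; rewrite pmulr_rgt0.
  apply: density ij sc sic ssi sis smono s0 HCH HCV _ hyi hyj.
  by move=> a a0; apply: (AX 1 a (or_introl erefl)); rewrite mul1r.
Qed.
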